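(* Let $T$ be a finite rooted tree. For each vertex $v$ of $T$ let $n_v$ be the number of vertices of the subtree $T_v$ rooted at $v$, and let $v_1,\dots,v_{\deg(v)}$ be the children of $v$. Define $C_v(x)\in\mathbb{Z}[x]$ inductively by $C_v(x)=x+2$ if $v$ is a leaf, and $C_v(x)=x^{n_v}+2x\prod_{i=1}^{\deg(v)}C_{v_i}(x)+2$ if $v$ is an internal node. Then for every vertex $v$ of $T$, $C_v(x)$ is irreducible over $\mathbb{Q}$.
   Context: $T_v$ consists of $v$ and all its descendants; $\deg(v)$ denotes the number of children of $v$. *)

(* Defs.v *)
From HB Require Import structures.
From Stdlib Require Import List.
From mathcomp Require Import all_boot all_order all_algebra.
Set Implicit Arguments. Unset Strict Implicit. Unset Printing Implicit Defensive.
Import Order.TTheory GRing.Theory Num.Theory.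
Local Open Scope ring_scope.

Inductive tree : Type := Node of seq tree.

Definition children (t : tree) : seq tree := let: Node ts := t in ts.

Fixpoint nverts (t : tree) : nat :=
  let: Node ts := t in (sumn (map nverts ts)).+1.

Fixpoint Cpoly (t : tree) : {poly int} :=
  let: Node ts := t in
  match ts with
  | [::] => 'X + 2%:P
  | _ => 'X^(nverts t) + 2%:P * 'X * \prod_(p <- map Cpoly ts) p + 2%:P
  end.

(* is_vertex T v : v is (the subtree T_v rooted at) a vertex of T. *)
Inductive is_vertex : tree -> tree -> Prop :=
  | is_vertex_root t : is_vertex t t
  | is_vertex_child ts c v : In c ts -> is_vertex c v -> is_vertex (Node ts) v.

(* Main.v *)
Require Import Defs.
From HB Require Import structures.
From Stdlib Require Import List.
From mathcomp Require Import all_boot all_order all_algebra.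
From mathcomp Require Import zify.
Import GRing.Theory Num.Theory.
Local Open Scope ring_scope.

Lemma tree_ind' (P : tree -> Prop) :
  (forall ts, (forall c, In c ts -> P c) -> P (Node ts)) -> forall t, P t.
Proof.
move=> H; exact: (fix IH t := match t with Node ts => H ts
  ((fix F l : forall c, In c l -> P c :=
     match l return forall c, In c l -> P c with
     | nil => fun c f => False_ind _ f
     | c' :: l' => fun c h => match h with
         | or_introl e => eq_ind c' P (IH c') c e
         | or_intror h' => F l' c h' end end) ts) end).
Qed.

Lemma size_prod_C ts : (forall c, In c ts -> (size (Cpoly c) <= (nverts c).+1)%N) ->
  (size (\prod_(p <- map Cpoly ts) p)%R <= (sumn (map nverts ts)).+1)%N.
Proof.
elim: ts => [|c ts IH] H /=; first by rewrite big_nil size_poly1.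
rewrite big_cons; apply: leq_trans (size_polyMleq _ _) _.
have h1 := H c (or_introl erefl).
have h2 := IH (fun d hd => H d (or_intror hd)).
rewrite /= in h1 *; move: h1 h2; set a := size _; set b := size _; lia.
Qed.

Lemma size_C t : (size (Cpoly t) <= (nverts t).+1)%N.
Proof.
elim/tree_ind': t => -[|c ts] IH; first by rewrite /= size_XaddC.
set ts' := c :: ts.
have hP := @size_prod_C ts' IH.
rewrite [Cpoly _]/= -/ts'.
set P := \prod_(_ <- _) _.
have hn : nverts (Node ts') = (sumn (map nverts ts')).+1 by [].
apply: leq_trans (size_polyD _ _) _; rewrite geq_max size_polyC.
apply/andP; split; last by case: (_ != _).
apply: leq_trans (size_polyD _ _) _; rewrite geq_max size_polyXn leqnn /=.
rewrite -mulrA; apply: leq_trans (size_polyMleq _ _) _.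
have h2 := size_polyC_leq1 (2 : int).
case: (eqVneq P 0) => [->|Pn0]; first by rewrite mulr0 size_poly0; move: h2; set b := size _; lia.
rewrite mulrC size_mulX //; rewrite -hn in hP; move: hP h2; set a := size P; set b := size _.
rewrite [nverts (Node ts')]/=; lia.
Qed.

Lemma C_props t : [/\ (Cpoly t)`_0 = 2,
   (forall i, (i < nverts t)%N -> (2 %| (Cpoly t)`_i)%Z) &
   ~~ (2 %| (Cpoly t)`_(nverts t))%Z].
Proof.
case: t => -[|c ts].
  rewrite /= !coefD !coefX !coefC /=; split.
  - by [].
  - by move=> [|i] // _; rewrite coefD coefX coefC.
  - by [].
set t := Node (c :: ts).
have -> : Cpoly t = 'X^(nverts t) + 2%:P * ('X * \prod_(p <- map Cpoly (c :: ts)) p) + 2%:P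
  by rewrite /= mulrA.
set P := \prod_(_ <- _) _.
have hn : (0 < nverts t)%N by [].
split.
- by rewrite !coefD coefXn coefCM coefXM coefC /=; case: (nverts t) hn.
- move=> i hi; rewrite !coefD coefXn coefCM coefXM coefC.
  rewrite (ltn_eqF hi) add0r; apply: rpredD; first exact: dvdz_mulr (dvdzz 2).
  by case: (i == 0%N).
- rewrite !coefD coefXn coefCM coefXM coefC eqxx (gtn_eqF hn) addr0.
  by rewrite addrC rpredDl // dvdz_mulr ?dvdzz.
Qed.

Theorem mainTheorem2 (T : tree) :
  forall v : tree, is_vertex T v ->
    irreducible_poly (map_poly (intr : int -> rat) (Cpoly v)).
Proof.
move=> v _; apply/irreducible_rat_int.
have [h0 hi hn] := C_props v.
have hs := size_C v.
have hsz : size (Cpoly v) = (nverts v).+1.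
  apply/eqP; rewrite eqn_leq hs /=.
  rewrite ltnNge; apply/negP => /(leq_sizeP _ _) /(_ _ (leqnn _)) h.
  by rewrite h dvdz0 in hn.
have hv : (0 < nverts v)%N by case: v {h0 hi hn hs hsz}.
apply: (@eisenstein_crit 2) => //.
- by rewrite hsz; lia.
- by rewrite lead_coefE hsz.
- by rewrite h0.
- by rewrite hsz => i /= /hi.
Qed.
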